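(* Let $d\ge 1$ and let $D_d=\langle x,y\mid y^2=1,\ x^d=1,\ y^{-1}xy=x^{-1}\rangle$ be the dihedral group of order $2d$. Let $I=\{0,1,\dots,\lfloor d/2\rfloor\}$; for $a\in I$ let $r_a=1$ if $2a\equiv 0\pmod d$ and $r_a=2$ otherwise, and $s_a=2/r_a$. For an integer $c$ let $\bar c\in I$ be the element with $\bar c\equiv c$ or $\bar c\equiv -c \pmod d$, and put $r_c:=r_{\bar c}$, $s_c:=s_{\bar c}$, $S_{c,\gamma}:=S_{\bar c,\gamma}$. The irreducible characters of $D_d$ are $\theta_{a,\alpha}$ for $a\in I$, $0\le\alpha<s_a$, where, with $\omega=e^{2\pi i/d}$, $\theta_{a,\alpha}(y^jx^i)=(-1)^{j\alpha}\sum_{s\in\{a,-a\}\bmod d}\omega^{si}$ if $r_a\mid j$ and $0$ otherwise (the sum over the set of residues $\{a \bmod d,-a\bmod d\}$). A quasigroup $Q$ of order $2d$ is a balanced cover of the weighted character quasigroup of $D_d$ if and only if there exist pairwise disjoint subsets $S_{a,\alpha}\subseteq Q$ with $|S_{a,\alpha}|=r_a^2$, for $a\in I$ and $0\le\alpha<s_a$, such that for all $a,b\in I$, $0\le\alpha<s_a$, $0\le\beta<s_b$, $$S_{a,\alpha}\cdot S_{b,\beta}=r_a\gcd(r_a,r_b)\sum_{i=0}^{r_b-1}\ \sum_{\gamma}\frac{S_{a+b(-1)^i,\gamma}}{r_{a+b(-1)^i}},$$ where the inner sum runs over all $0\le\gamma<s_{a+b(-1)^i}$ with $\alpha+\beta-\gamma\equiv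 0\pmod{\gcd(s_a,s_b)}$.
   Context: For subsets $A,B$ of $Q$, $A\cdot B=\sum_{a\in A,b\in B}ab$ is the formal sum in the free module on $Q$ (recording multiplicities), and a subset is identified with the sum of its elements; the displayed equation is an equality of formal linear combinations of elements of $Q$ with rational coefficients. The scalar product of class functions is $\langle\theta\mid\varphi\rangle=\frac{1}{|G|}\sum_{g}\theta(g)\overline{\varphi(g)}$. The weighted character quasigroup of a finite group $G$ has underlying set the irreducible characters, weights $w(\theta)=\theta(1)^2$, and multiplication function $\alpha(\theta_i,\theta_j,\theta_k)=\theta_i(1)\theta_j(1)\theta_k(1)\langle\theta_i\theta_j\mid\theta_k\rangle$. A quasigroup $Q$ of order $|G|$ covers it if there is a surjection $f$ from $Q$ onto the irreducible characters with $|f^{-1}\{\theta\}|=\theta(1)^2$ and $|\{(a,b)\in f^{-1}\{\theta_i\}\times f^{-1}\{\theta_j\}: f(ab)=\theta_k\}|=\alpha(\theta_i,\theta_j,\theta_k)$ for all $i,j,k$; the cover is balanced if for all $i,j$ and all $q\in Q$ the number of pairs $(a,b)\in f^{-1}\{\theta_i\}\times f^{-1}\{\theta_j\}$ with $ab=q$ depends only on $f(q)$. *)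

(* Defs.v *)
From HB Require Import structures.
From mathcomp Require Import all_boot all_order all_algebra all_fingroup all_field all_character.
Unset Printing Implicit Defensive.
Import Order.TTheory GRing.Theory Num.Theory.

Definition is_quasigroup (Q : finType) (mul : Q -> Q -> Q) : Prop :=
  (forall a : Q, bijective (mul a)) /\ (forall a : Q, bijective (fun b => mul b a)).

(* G is generated by x, y with y^2 = 1, x^d = 1, y^-1 x y = x^-1, and |G| = 2d;
   such a G is isomorphic to D_d = <x,y | y^2, x^d, y^-1xy = x^-1>. *)
Definition dihedral_pres (gT : finGroupType) (d : nat) (G : {group gT}) (x y : gT)
  : Prop :=
  [/\ G :=: <<[set x; y]>>%g, (y ^+ 2 = 1)%g, (x ^+ d = 1)%g,
      (x ^ y = x^-1)%g & #|G| = (2 * d)%N].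

Local Open Scope ring_scope.

Definition is_cover (gT : finGroupType) (G : {group gT}) (Q : finType)
  (mul : Q -> Q -> Q) (f : Q -> Iirr G) : Prop :=
  [/\ #|Q| = #|G|,
      (forall i : Iirr G, exists q : Q, f q = i),
      (forall i : Iirr G, (#|[set q | f q == i]|)%:R = ('chi[G]_i 1%g) ^+ 2 :> algC) &
      (forall i j k : Iirr G,
          (#|[set p : Q * Q | [&& f p.1 == i, f p.2 == j & f (mul p.1 p.2) == k]]|)%:R
          = 'chi[G]_i 1%g * 'chi[G]_j 1%g * 'chi[G]_k 1%g * '['chi[G]_i * 'chi[G]_j, 'chi[G]_k]
          :> algC)].

Definition is_balanced (gT : finGroupType) (G : {group gT}) (Q : finType)
  (mul : Q -> Q -> Q) (f : Q -> Iirr G) : Prop :=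
  forall (i j : Iirr G) (q q' : Q), f q = f q' ->
    #|[set p : Q * Q | [&& f p.1 == i, f p.2 == j & mul p.1 p.2 == q]]|
    = #|[set p : Q * Q | [&& f p.1 == i, f p.2 == j & mul p.1 p.2 == q']]|.

Definition balanced_cover (gT : finGroupType) (G : {group gT}) (Q : finType)
  (mul : Q -> Q -> Q) : Prop :=
  exists f : Q -> Iirr G, is_cover gT G Q mul f /\ is_balanced gT G Q mul f.

Definition dih_r (d a : nat) : nat := if (d %| 2 * a)%N then 1%N else 2%N.
Definition dih_s (d a : nat) : nat := (2 %/ dih_r d a)%N.
Definition dih_bar (d : nat) (c : int) : nat :=
  let m := `|(c %% d%:Z)%Z|%N in minn m (d - m).

(* coefficient of q in the formal product A . B (with multiplicities) *)
Definition prod_coef (Q : finType) (mul : Q -> Q -> Q) (A B : {set Q}) (q : Q) : nat :=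
  #|[set p : Q * Q | [&& p.1 \in A, p.2 \in B & mul p.1 p.2 == q]]|.

(* coefficient of q in
   r_a gcd(r_a,r_b) sum_{i<r_b} sum_{gamma} S_{a+b(-1)^i,gamma} / r_{a+b(-1)^i} *)
Definition rhs_coef (Q : finType) (d : nat) (S : nat -> nat -> {set Q})
  (a alpha b beta : nat) (q : Q) : rat :=
  ((dih_r d a * gcdn (dih_r d a) (dih_r d b))%N)%:R *
  \sum_(i < dih_r d b)
     let c := dih_bar d (a%:Z + b%:Z * (-1) ^+ i) in
     \sum_(gamma < dih_s d c |
             ((gcdn (dih_s d a) (dih_s d b))%:Z %| (alpha%:Z + beta%:Z - (gamma : nat)%:Z))%Z)
        (q \in S c gamma)%:R / (dih_r d c)%:R.
Arguments is_quasigroup {Q}.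
Arguments balanced_cover {gT}  G {Q}.
Arguments prod_coef {Q}.
Arguments rhs_coef {Q}.

(* Main.v *)
Require Import Defs.
From HB Require Import structures.
From mathcomp Require Import all_boot all_order all_algebra all_fingroup all_solvable all_field all_character.
From mathcomp Require Import zify ring lra.
Import Order.TTheory GRing.Theory Num.Theory.
Set Implicit Arguments. Unset Strict Implicit. Unset Printing Implicit Defensive.
Section DihGroup.
Variables (d : nat) (gT : finGroupType) (G : {group gT}) (x y : gT).
Hypotheses (d_gt0 : (0 < d)%N) (Hp : dihedral_pres gT d G x y).
Local Open Scope group_scope.

Lemma dy2 : y ^+ 2 = 1. Proof. by case: Hp. Qed.
Lemma dxd : x ^+ d = 1. Proof. by case: Hp. Qed.
Lemma dxy : x ^ y = x^-1. Proof. by case: Hp. Qed.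
Lemma dcard : #|G| = (2 * d)%N. Proof. by case: Hp. Qed.
Lemma dG : G :=: <<[set x; y]>>. Proof. by case: Hp. Qed.

Lemma xG : x \in G. Proof. by rewrite dG mem_gen // !inE eqxx. Qed.
Lemma yG : y \in G. Proof. by rewrite dG mem_gen // !inE eqxx orbT. Qed.

Lemma nXy : <[y]> \subset 'N(<[x]>).
Proof. by rewrite cycle_subG inE -cycleJ dxy cycleV subxx. Qed.

Lemma dGXY : G :=: <[x]> * <[y]>.
Proof.
rewrite -norm_joinEr ?nXy //; apply/eqP; rewrite eqEsubset; apply/andP; split.
- rewrite dG gen_subG; apply/subsetP => z; rewrite !inE => /orP[] /eqP ->.
  + by rewrite mem_gen // inE cycle_id.
  + by rewrite mem_gen // inE cycle_id orbT.
- by rewrite join_subG !cycle_subG xG yG.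
Qed.

Lemma dorders : [/\ #[x] = d, #[y] = 2%N & <[x]> :&: <[y]> = 1].
Proof.
have h := mul_cardG <[x]>%G <[y]>%G.
rewrite /= -dGXY dcard in h.
have h' : (#[x] * #[y] = 2 * d * #|<[x]> :&: <[y]>|)%N by exact: h.
have hx : (#[x] <= d)%N by apply: dvdn_leq => //; rewrite order_dvdn dxd.
have hy : (#[y] <= 2)%N by apply: dvdn_leq => //; rewrite order_dvdn dy2.
have hk : (0 < #|<[x]> :&: <[y]>|)%N by apply: cardG_gt0.
suff [ea eb e1] : [/\ #[x] = d, #[y] = 2%N & #|<[x]> :&: <[y]>| = 1%N].
  by split => //; apply/eqP; rewrite trivg_card1 e1.
move: h' hx hy hk; rewrite /order.
move: #|<[x]>| #|<[y]>| #|<[x]> :&: <[y]>| => a b k h' hx hy hk.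
have e1 : k = 1%N by nia.
split => //; nia.
Qed.

Lemma ordx : #[x] = d. Proof. by case: dorders. Qed.
Lemma ordy : #[y] = 2%N. Proof. by case: dorders. Qed.

Lemma ddecomp g : g \in G -> exists i j, [/\ (i < d)%N, (j < 2)%N & g = x ^+ i * y ^+ j].
Proof.
rewrite dGXY => /mulsgP [a b /cycleP [i ->] /cycleP [j ->] ->].
exists (i %% d)%N, (j %% 2)%N; split; rewrite ?ltn_pmod //.
by rewrite -ordx -ordy !expg_mod_order.
Qed.

Lemma duniq i j k l : x ^+ i * y ^+ j = x ^+ k * y ^+ l ->
  (i = k %[mod d])%N /\ (j = l %[mod 2])%N.
Proof.
move=> E.
have E' : (x ^+ k)^-1 * x ^+ i = y ^+ l * (y ^+ j)^-1.
  by rewrite -[x ^+ i](mulgK (y ^+ j)) E mulgA mulKg.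
have h : (x ^+ k)^-1 * x ^+ i \in <[x]> :&: <[y]>.
  by rewrite inE groupM ?groupV ?mem_cycle //= E' groupM ?groupV ?mem_cycle.
case: dorders => ox oy I1; rewrite I1 in h; move/set1gP: h => h.
have h2 : y ^+ l * (y ^+ j)^-1 = 1 by rewrite -E'.
split; apply/eqP.
- by rewrite -ox -eq_expg_mod_order eq_sym eq_mulVg1 h.
- by rewrite -oy -eq_expg_mod_order eq_sym eq_mulgV1 h2.
Qed.

Definition dec (g : gT) : nat * nat :=
  odflt (0,0)%N (omap (fun p : 'I_d * 'I_2 => (p.1 : nat, p.2 : nat))
     [pick p : 'I_d * 'I_2 | g == x ^+ p.1 * y ^+ p.2]).

Lemma decE i j : dec (x ^+ i * y ^+ j) = ((i %% d)%N, (j %% 2)%N).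
Proof.
rewrite /dec; case: pickP => [[p1 p2] /eqP /= E | none] /=.
  case: (duniq E) => /eqP e1 /eqP e2.
  by rewrite !(modn_small (ltn_ord _)) in e1 e2; rewrite (eqP e1) (eqP e2).
have := none (Ordinal (ltn_pmod i d_gt0), Ordinal (ltn_pmod j (isT : (0 < 2)%N))).
by rewrite /= -{1}ordx -{1}ordy !expg_mod_order eqxx.
Qed.

Lemma decG g : g \in G ->
  [/\ g = x ^+ (dec g).1 * y ^+ (dec g).2, ((dec g).1 < d)%N & ((dec g).2 < 2)%N].
Proof.
case/ddecomp => i [j [hi hj ->]]; rewrite decE /= !modn_small //.
Qed.

Lemma yinv : y^-1 = y.
Proof. by apply/eqP; rewrite eq_invg_mul -{1 2}(expg1 y) -expgD dy2. Qed.

Lemma xneg k : x ^+ (d.-1 * k) = (x ^+ k)^-1.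
Proof.
apply/eqP; rewrite eq_mulgV1 invgK -expgD addnC -mulSn prednK // expgM dxd expg1n //.
Qed.

Lemma yx k : y * x ^+ k = x ^+ (d.-1 * k) * y.
Proof.
have : (x ^+ k) ^ y = (x ^+ k)^-1 by rewrite conjXg dxy expgVn.
rewrite conjgE yinv xneg => <-.
by rewrite -!mulgA -{4}yinv mulgV mulg1.
Qed.


Lemma yjx j k : (y ^+ j * x ^+ k = x ^+ (if odd j then (d.-1 * k)%N else k) * y ^+ j)%g.
Proof.
elim: j => [|j IH]; first by rewrite expg0 mulg1 mul1g.
rewrite expgS -mulgA IH mulgA yx -mulgA /=.
case: (odd j) => //=.
by rewrite !xneg invgK.
Qed.

Section Rep.
Local Open Scope ring_scope.
Variables (n : nat) (Dm : nat -> 'M[algC]_n) (Pm : 'M[algC]_n).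
Hypotheses (D0 : Dm 0 = 1%:M) (DD : forall i k, Dm i *m Dm k = Dm (i + k)%N)
  (Dd : Dm d = 1%:M) (PP : Pm *m Pm = 1%:M)
  (PD : forall k, Pm *m Dm k = Dm (d.-1 * k)%N *m Pm).

Definition Pw (j : nat) := if odd j then Pm else 1%:M.
Definition rfun (g : gT) := Dm (dec g).1 *m Pw (dec g).2.

Lemma Dmod i : Dm (i %% d) = Dm i.
Proof.
have Dmul q : Dm (q * d)%N = 1%:M.
  by elim: q => [|q IH]; rewrite ?mul0n ?D0 // mulSn -DD Dd IH mul1mx.
by rewrite {2}(divn_eq i d) -DD Dmul mul1mx.
Qed.

Lemma rfun_xy i j : rfun (x ^+ i * y ^+ j)%g = Dm i *m Pw j.
Proof. by rewrite /rfun decE /= Dmod /Pw modn2 oddb. Qed.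

Lemma PwD j l : Pw j *m Pw l = Pw (j + l).
Proof.
rewrite /Pw oddD; case: (odd j); case: (odd l); rewrite /= ?mul1mx ?mulmx1 //.
Qed.

Lemma PwDm j k : Pw j *m Dm k = Dm (if odd j then d.-1 * k else k)%N *m Pw j.
Proof. by rewrite /Pw; case: (odd j); rewrite ?mul1mx ?mulmx1. Qed.

Lemma rfun_mul i j k l :
  rfun ((x ^+ i * y ^+ j) * (x ^+ k * y ^+ l))%g =
  rfun (x ^+ i * y ^+ j)%g *m rfun (x ^+ k * y ^+ l)%g.
Proof.
rewrite -mulgA (mulgA (y ^+ j)%g) yjx -!mulgA mulgA -!expgD !rfun_xy.
by rewrite -DD -PwD !mulmxA -[Dm i *m Pw j *m Dm k]mulmxA PwDm !mulmxA.
Qed.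

Lemma rfun_repr : mx_repr G rfun.
Proof.
split.
  by rewrite -[1%g](mulg1 1%g) -{1}(expg0 x) -(expg0 y) rfun_xy D0 /Pw /= mul1mx.
move=> g h Gg Gh.
have [eg _ _] := decG Gg; have [eh _ _] := decG Gh.
by rewrite eg eh rfun_mul.
Qed.

Definition rrep : mx_representation algC G n := MxRepresentation rfun_repr.
Definition rchar := cfRepr rrep.

Lemma rcharE i j : rchar (x ^+ i * y ^+ j)%g = \tr (Dm i *m Pw j).
Proof.
by rewrite /rchar cfunE groupM ?groupX ?xG ?yG // mulr1n /= rfun_xy.
Qed.

Lemma rchar1 : rchar 1%g = n%:R.
Proof. exact: cfRepr1. Qed.

Lemma rchar_char : rchar \is a character.
Proof. exact: cfRepr_char. Qed.

End Rep.
Local Open Scope ring_scope.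

Lemma root_neq0 (w : algC) : w ^+ d = 1 -> w != 0.
Proof. by move=> h; apply/eqP => w0; move: h; rewrite w0 expr0n gtn_eqF // => /eqP; rewrite eq_sym oner_eq0. Qed.

Lemma rootneg (w : algC) k : w ^+ d = 1 -> w ^+ (d.-1 * k) * w ^+ k = 1.
Proof. by move=> h; rewrite -exprD addnC -mulSn prednK // exprM h expr1n. Qed.

Lemma rootinv (w : algC) k : w ^+ d = 1 -> w ^+ (d.-1 * k) = (w ^+ k)^-1.
Proof.
move=> h; have nz : w ^+ k != 0 by rewrite expf_neq0 // root_neq0.
by rewrite -[LHS]mulr1 -(mulfV nz) mulrA rootneg // mul1r.
Qed.

Lemma inv_sq1 (w : algC) : w ^+ 2 = 1 -> w^-1 = w.
Proof.
move=> h; have nz : w != 0 by apply/eqP => w0; move: h; rewrite w0 expr0n /= => /eqP; rewrite eq_sym oner_eq0.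
by rewrite -[w^-1]mulr1 -h expr2 mulKf.
Qed.

Definition nz1 (z : algC) := if (z ^+ 2 == 1) && (z ^+ d == 1) then z else 1.
Definition ne1 (e : algC) := if e ^+ 2 == 1 then e else 1.
Lemma nz1_2 z : nz1 z ^+ 2 = 1.
Proof. by rewrite /nz1; case: ifP => [/andP[/eqP] | _] //; rewrite expr1n. Qed.
Lemma nz1_d z : nz1 z ^+ d = 1.
Proof. by rewrite /nz1; case: ifP => [/andP[_ /eqP] | _] //; rewrite expr1n. Qed.
Lemma ne1_2 e : ne1 e ^+ 2 = 1.
Proof. by rewrite /ne1; case: ifP => [/eqP | _] //; rewrite expr1n. Qed.

Definition D1 z i : 'M[algC]_1 := (nz1 z ^+ i)%:M.
Definition P1 e : 'M[algC]_1 := (ne1 e)%:M.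
Lemma D1_0 z : D1 z 0 = 1%:M. Proof. by rewrite /D1 expr0. Qed.
Lemma D1_D z i k : D1 z i *m D1 z k = D1 z (i + k). Proof. by rewrite /D1 -scalar_mxM exprD. Qed.
Lemma D1_d z : D1 z d = 1%:M. Proof. by rewrite /D1 nz1_d. Qed.
Lemma P1_P e : P1 e *m P1 e = 1%:M. Proof. by rewrite /P1 -scalar_mxM -expr2 ne1_2. Qed.
Lemma D1_PD z e k : P1 e *m D1 z k = D1 z (d.-1 * k) *m P1 e.
Proof.
rewrite /P1 /D1 -!scalar_mxM mulrC rootinv ?nz1_d // inv_sq1 //.
by rewrite exprAC nz1_2 expr1n.
Qed.

Definition chi1 z e := rchar (D1_0 z) (D1_D z) (D1_d z) (P1_P e) (D1_PD z e).

Lemma chi1E z e i j : chi1 z e (x ^+ i * y ^+ j)%g = nz1 z ^+ i * (if odd j then ne1 e else 1).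
Proof.
rewrite /chi1 rcharE /Pw /D1 /P1; case: (odd j); rewrite ?mulmx1 -?scalar_mxM mxtrace_scalar ?mulr1 //.
Qed.

Lemma chi1_1 z e : chi1 z e 1%g = 1. Proof. by rewrite /chi1 rchar1. Qed.

Lemma chi1_irr z e : chi1 z e \in irr G.
Proof. by apply: lin_char_irr; rewrite qualifE /= rchar_char chi1_1 eqxx. Qed.

Definition nz2 (z : algC) := if z ^+ d == 1 then z else 1.
Lemma nz2_d z : nz2 z ^+ d = 1.
Proof. by rewrite /nz2; case: ifP => [/eqP | _] //; rewrite expr1n. Qed.

Definition D2 z i : 'M[algC]_2 := \matrix_(r, s)
  (if r == s then (if (r : nat) == 0%N then nz2 z ^+ i else (nz2 z ^+ i)^-1) else 0).
Definition P2 : 'M[algC]_2 := \matrix_(r, s) (r != s)%:R.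

Lemma D2_D z i k : D2 z i *m D2 z k = D2 z (i + k).
Proof.
apply/matrixP => r s; rewrite !mxE !big_ord_recl !big_ord0 !mxE !addr0.
case: r => [[|[|//]] hr]; case: s => [[|[|//]] hs]; rewrite /= ?mulr0 ?mul0r ?addr0 ?add0r.
all: by rewrite ?exprD ?invfM.
Qed.

Lemma D2_0 z : D2 z 0 = 1%:M.
Proof.
apply/matrixP => r s; rewrite !mxE.
by case: r => [[|[|//]] hr]; case: s => [[|[|//]] hs]; rewrite /= ?expr0 ?invr1.
Qed.

Lemma D2_d z : D2 z d = 1%:M.
Proof.
apply/matrixP => r s; rewrite !mxE nz2_d.
by case: r => [[|[|//]] hr]; case: s => [[|[|//]] hs]; rewrite /= ?invr1.
Qed.

Lemma P2_P : P2 *m P2 = 1%:M.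
Proof.
apply/matrixP => r s; rewrite !mxE !big_ord_recl !big_ord0 !mxE !addr0.
by case: r => [[|[|//]] hr]; case: s => [[|[|//]] hs]; rewrite /= ?mulr0 ?mul0r ?addr0 ?add0r ?mulr1.
Qed.

Lemma D2_PD z k : P2 *m D2 z k = D2 z (d.-1 * k) *m P2.
Proof.
apply/matrixP => r s; rewrite !mxE !big_ord_recl !big_ord0 !mxE !addr0.
rewrite rootinv ?nz2_d //.
by case: r => [[|[|//]] hr]; case: s => [[|[|//]] hs]; rewrite /= ?mulr0 ?mul0r ?addr0 ?add0r ?mulr1 ?mul1r ?invrK.
Qed.

Definition chi2 z := rchar (D2_0 z) (D2_D z) (D2_d z) P2_P (D2_PD z).

Lemma chi2E z i j : chi2 z (x ^+ i * y ^+ j)%g =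
  if odd j then 0 else nz2 z ^+ i + (nz2 z ^+ i)^-1.
Proof.
rewrite /chi2 rcharE /Pw; case: (odd j); rewrite ?mulmx1 /mxtrace !big_ord_recl !big_ord0 !mxE /=.
  by rewrite !big_ord_recl !big_ord0 !mxE /= !mulr0 !mul0r !addr0.
by rewrite addr0.
Qed.

Lemma chi2_1 z : chi2 z 1%g = 2%:R. Proof. by rewrite /chi2 rchar1. Qed.
Lemma chi2_char z : chi2 z \is a character. Proof. exact: rchar_char. Qed.

Lemma sumG (F : gT -> algC) :
  \sum_(g in G) F g = \sum_(i < d) \sum_(j < 2) F (x ^+ i * y ^+ j)%g.
Proof.
have -> : G = [set (x ^+ p.1 * y ^+ p.2)%g | p : 'I_d * 'I_2] :> {set gT}.
  apply/setP => g; apply/idP/idP.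
    move=> Gg; have [eg h1 h2] := decG Gg.
    by apply/imsetP; exists (Ordinal h1, Ordinal h2) => //.
  by case/imsetP => p _ ->; rewrite groupM ?groupX ?xG ?yG.
rewrite big_imset /=.
  by rewrite pair_big /=; apply: eq_bigl => p; rewrite inE.
move=> [i j] [k l] _ _ /= /duniq [].
rewrite !modn_small ?ltn_ord // => e1 e2.
by congr (_, _); apply: val_inj.
Qed.

Lemma geom0 (w : algC) : w ^+ d = 1 -> w != 1 -> \sum_(i < d) w ^+ i = 0.
Proof.
move=> h n1; have := subrX1 w d; rewrite h subrr => /esym /eqP.
by rewrite mulf_eq0 subr_eq0 (negbTE n1) /= => /eqP.
Qed.

Lemma conj_root (w : algC) : w ^+ d = 1 -> w^* = w^-1.
Proof.
move=> h; have n1 : `|w| = 1.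
  by apply/eqP; rewrite -(pexpr_eq1 d_gt0) ?normr_ge0 // -normrX h normr1.
have nz := root_neq0 h.
have : w * w^* = 1 by rewrite -normCK n1 expr1n.
by move=> e; rewrite -[w^*]mul1r -(mulVf nz) -mulrA e mulr1.
Qed.

Lemma chi2_norm z : z ^+ d = 1 -> z ^+ 2 != 1 -> '[chi2 z] = 1.
Proof.
move=> hd h2; have e : nz2 z = z by rewrite /nz2 hd eqxx.
have nz := root_neq0 hd.
rewrite cfdotE sumG.
have key i : chi2 z (x ^+ i * y ^+ 0)%g * (chi2 z (x ^+ i * y ^+ 0)%g)^* +
   (chi2 z (x ^+ i * y ^+ 1)%g * (chi2 z (x ^+ i * y ^+ 1)%g)^* + 0) =
   (z ^+ 2) ^+ i + 2%:R + ((z ^+ 2)^-1) ^+ i.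
  rewrite !chi2E /= e mul0r !addr0 rmorphD /= fmorphV /= rmorphXn /= conj_root //.
  rewrite !exprVn invrK (exprAC z 2 i).
  have nzi : z ^+ i != 0 by rewrite expf_neq0.
  move: nzi; move: (z ^+ i) => U nzU.
  field.
  exact: nzU.
under eq_bigr => i _ do rewrite !big_ord_recl big_ord0 /= key.
have g1 : (z ^+ 2) ^+ d = 1 by rewrite exprAC hd expr1n.
have g2 : ((z ^+ 2)^-1) ^+ d = 1 by rewrite exprVn g1 invr1.
rewrite !big_split /= !geom0 ?invr_eq1 //.
rewrite add0r addr0 sumr_const card_ord dcard -natrD addnn -mul2n mulVf //.
by rewrite pnatr_eq0 -lt0n muln_gt0 d_gt0.
Qed.

Lemma chi2_irr z : z ^+ d = 1 -> z ^+ 2 != 1 -> chi2 z \in irr G.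
Proof. by move=> h1 h2; rewrite irrEchar chi2_char chi2_norm // eqxx. Qed.
Lemma cf_xy (phi psi : 'CF(G)) :
  (forall i j, (i < d)%N -> (j < 2)%N -> phi (x ^+ i * y ^+ j)%g = psi (x ^+ i * y ^+ j)%g) ->
  phi = psi.
Proof. by move=> H; apply/cfun_inP => g Gg; have [eg h1 h2] := decG Gg; rewrite eg; apply: H. Qed.

Lemma nz1E z : z ^+ 2 = 1 -> z ^+ d = 1 -> nz1 z = z.
Proof. by move=> h1 h2; rewrite /nz1 h1 h2 !eqxx. Qed.
Lemma nz2E z : z ^+ d = 1 -> nz2 z = z.
Proof. by move=> h; rewrite /nz2 h eqxx. Qed.
Lemma ne1E e : e ^+ 2 = 1 -> ne1 e = e.
Proof. by move=> h; rewrite /ne1 h eqxx. Qed.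
Lemma sqN1 : (-1 : algC) ^+ 2 = 1. Proof. by rewrite sqrrN expr1n. Qed.

Lemma sq_invE (u : algC) i : u ^+ 2 = 1 -> (u ^+ i)^-1 = u ^+ i.
Proof. by move=> h; rewrite inv_sq1 // exprAC h expr1n. Qed.

Lemma prodC1 z w e f : z ^+ 2 = 1 -> z ^+ d = 1 -> w ^+ 2 = 1 -> w ^+ d = 1 ->
  e ^+ 2 = 1 -> f ^+ 2 = 1 -> chi1 z e * chi1 w f = chi1 (z * w) (e * f).
Proof.
move=> z2 zd w2 wd e2 f2; apply: cf_xy => i j _ _.
rewrite cfunE !chi1E !nz1E ?ne1E ?exprMn ?z2 ?w2 ?zd ?wd ?e2 ?f2 ?mulr1 //.
by case: (odd j); rewrite ?mulr1 // mulrACA.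
Qed.

Lemma prodC12 u e v : u ^+ 2 = 1 -> u ^+ d = 1 -> v ^+ d = 1 ->
  chi1 u e * chi2 v = chi2 (u * v).
Proof.
move=> u2 ud vd; apply: cf_xy => i j _ _.
rewrite cfunE chi1E !chi2E !nz1E ?nz2E ?exprMn ?ud ?vd ?mulr1 //.
case: (odd j); rewrite ?mulr0 // mulr1 mulrDr invfM (sq_invE i u2) //.
Qed.

Lemma prodC21 u v f : v ^+ 2 = 1 -> v ^+ d = 1 -> u ^+ d = 1 ->
  chi2 u * chi1 v f = chi2 (u * v).
Proof.
move=> v2 vd ud; apply: cf_xy => i j _ _.
rewrite cfunE chi1E !chi2E !nz1E ?nz2E ?exprMn ?ud ?vd ?mulr1 //.
case: (odd j); rewrite ?mul0r // mulr1 mulrDl invfM (sq_invE i v2) //.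
Qed.

Lemma prodC22 u v : u ^+ d = 1 -> v ^+ d = 1 ->
  chi2 u * chi2 v = chi2 (u * v) + chi2 (u * v^-1).
Proof.
move=> ud vd; have nu := root_neq0 ud; have nv := root_neq0 vd.
have uvd : (u * v) ^+ d = 1 by rewrite exprMn ud vd mulr1.
have uvd' : (u * v^-1) ^+ d = 1 by rewrite exprMn exprVn ud vd invr1 mulr1.
apply: cf_xy => i j _ _.
rewrite [LHS]cfunE [RHS]cfunE !chi2E (nz2E ud) (nz2E vd) (nz2E uvd) (nz2E uvd').
case: (odd j); rewrite ?mulr0 ?addr0 //.
rewrite !exprMn !exprVn.
have nui : u ^+ i != 0 by rewrite expf_neq0.
have nvi : v ^+ i != 0 by rewrite expf_neq0.
move: nui nvi; move: (u ^+ i) (v ^+ i) => U V nU nV.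
by field; rewrite nU nV.
Qed.

Lemma chi2V u : u ^+ d = 1 -> chi2 u^-1 = chi2 u.
Proof.
move=> ud; apply: cf_xy => i j _ _.
rewrite !chi2E !nz2E ?exprVn ?ud ?invr1 // invrK addrC //.
Qed.

Lemma chi2_split u : u ^+ 2 = 1 -> u ^+ d = 1 -> chi2 u = chi1 u 1 + chi1 u (-1).
Proof.
move=> u2 ud; apply: cf_xy => i j _ _.
rewrite [RHS]cfunE !chi2E !chi1E !nz1E ?nz2E ?ne1E ?sqN1 ?expr1n //.
case: (odd j); first by rewrite mulr1 mulrN1 subrr.
by rewrite sq_invE // !mulr1.
Qed.
Definition omega : algC := sval (C_prim_root_exists d_gt0).
Lemma om_prim : d.-primitive_root omega.
Proof. exact: (svalP (C_prim_root_exists d_gt0)). Qed.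
Lemma om_d c : (omega ^+ c) ^+ d = 1.
Proof. by rewrite exprAC (prim_expr_order om_prim) expr1n. Qed.

Definition psi (c g : nat) : 'CF(G) :=
  let z := omega ^+ c in if z ^+ 2 == 1 then chi1 z ((-1) ^+ g) else chi2 z.

Lemma r_eq c : dih_r d c = if (omega ^+ c) ^+ 2 == 1 then 1%N else 2%N.
Proof. by rewrite /dih_r (prim_order_dvd om_prim) mulnC exprM. Qed.

Lemma rs_cases a : (dih_r d a = 1%N /\ dih_s d a = 2%N) \/ (dih_r d a = 2%N /\ dih_s d a = 1%N).
Proof. by rewrite /dih_s /dih_r; case: ifP; [left | right]. Qed.

Lemma psi_irr c g : psi c g \in irr G.
Proof.
rewrite /psi; case: ifP => h; first exact: chi1_irr.
by apply: chi2_irr; rewrite ?om_d ?h.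
Qed.

Lemma psi1 c g : psi c g 1%g = (dih_r d c)%:R.
Proof. by rewrite /psi r_eq; case: ifP => _; rewrite ?chi1_1 ?chi2_1. Qed.

Lemma chi1_x z e : z ^+ 2 = 1 -> z ^+ d = 1 -> chi1 z e (x ^+ 1 * y ^+ 0)%g = z.
Proof. by move=> h1 h2; rewrite chi1E nz1E // mulr1. Qed.
Lemma chi1_y z e : e ^+ 2 = 1 -> chi1 z e (x ^+ 0 * y ^+ 1)%g = e.
Proof. by move=> h; rewrite chi1E ne1E // expr0 mul1r. Qed.
Lemma chi2_x z : z ^+ d = 1 -> chi2 z (x ^+ 1 * y ^+ 0)%g = z + z^-1.
Proof. by move=> h; rewrite chi2E nz2E. Qed.
Lemma chi2_y z : chi2 z (x ^+ 0 * y ^+ 1)%g = 0.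
Proof. by rewrite chi2E. Qed.

Lemma sgn2 g : ((-1 : algC) ^+ g) ^+ 2 = 1.
Proof. by rewrite exprAC sqN1 expr1n. Qed.

Lemma half_lt : (d./2 < d)%N.
Proof. have := odd_double_half d; rewrite -muln2; lia. Qed.

Lemma modd_eq a b : (a <= d./2)%N -> (b <= d./2)%N -> (a == b %[mod d]) -> a = b.
Proof.
move=> ha hb; have hd := half_lt.
by rewrite !modn_small; [move/eqP | lia | lia].
Qed.

Lemma psi_inj a al b be : (a <= d./2)%N -> (al < dih_s d a)%N ->
  (b <= d./2)%N -> (be < dih_s d b)%N -> psi a al = psi b be -> a = b /\ al = be.
Proof.
move=> ha hal hb hbe E.
have Ex := congr1 (fun phi : 'CF(G) => phi (x ^+ 1 * y ^+ 0)%g) E.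
have Ey := congr1 (fun phi : 'CF(G) => phi (x ^+ 0 * y ^+ 1)%g) E.
clear E; move: Ex Ey hal hbe; rewrite /psi /dih_s !r_eq.
have n1 : (-1 : algC) != 1 by rewrite lt_eqF // (lt_trans (ltrN10 _) ltr01).
case: ifP => ha2; case: ifP => hb2.
- move/eqP: ha2 => ha2; move/eqP: hb2 => hb2.
  rewrite !chi1_x ?chi1_y ?sgn2 ?om_d // => /eqP Ea Eb hal hbe.
  move: Ea; rewrite (eq_prim_root_expr om_prim) => /(modd_eq ha hb) ab; split => //.
  move: Eb hal hbe; case: al => [|[|//]]; case: be => [|[|//]] //; rewrite ?expr0 ?expr1 => /eqP.
    by rewrite eq_sym (negbTE n1).
  by rewrite (negbTE n1).
- rewrite chi1_y ?sgn2 // chi2_y => _ /eqP; rewrite expf_eq0 /= oppr_eq0 oner_eq0 andbF //.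
- rewrite chi1_y ?sgn2 // chi2_y => _ /eqP; rewrite eq_sym expf_eq0 /= oppr_eq0 oner_eq0 andbF //.
- rewrite !chi2_x ?om_d // => E1 _.
  case: al => // _; case: be => // _; split => //.
  set A := omega ^+ a in E1; set B := omega ^+ b in E1.
  have nA : A != 0 by rewrite expf_neq0 // root_neq0 // (prim_expr_order om_prim).
  have nB : B != 0 by rewrite expf_neq0 // root_neq0 // (prim_expr_order om_prim).
  have : (A - B) * (1 - (A * B)^-1) = 0.
    have -> : (A - B) * (1 - (A * B)^-1) = (A + A^-1) - (B + B^-1) by field; rewrite nA nB.
    by rewrite E1 subrr.
  move/eqP; rewrite mulf_eq0 subr_eq0 => /orP [/eqP|].
    by move/eqP; rewrite (eq_prim_root_expr om_prim) => /(modd_eq ha hb).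
  rewrite subr_eq0 eq_sym invr_eq1 -exprD -(prim_order_dvd om_prim) => dv.
  have := odd_double_half d; rewrite -muln2 => hd.
  have ab : (a + b <= d)%N by lia.
  have [ab0|abd] : (a + b = 0 \/ a + b = d)%N.
    case: (posnP (a + b)) => [->|pos]; [by left | right].
    by apply/eqP; rewrite eqn_leq ab dvdn_leq.
  + by lia.
  + by lia.
Qed.
Definition phi (c g : nat) : Iirr G := cfIirr (psi c g).
Lemma phiE c g : 'chi_(phi c g) = psi c g.
Proof. exact: cfIirrE (psi_irr c g). Qed.

Lemma sum_ra : (\sum_(a < (d./2).+1) dih_r d a)%N = d.
Proof.
have hd := odd_double_half d; rewrite -muln2 in hd.
case: (ltnP d 2) => [d1|d2].
  have e1 : d = 1%N by lia.
  by rewrite e1 big_ord_recl big_ord0 /dih_r.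
case E: (d./2) hd => [|m] hd; first lia.
rewrite big_ord_recl big_ord_recr /=.
have r0 : dih_r d 0 = 1%N by rewrite /dih_r muln0 dvdn0.
rewrite r0.
rewrite (eq_bigr (fun _ => 2%N)); last first.
  move=> i _; rewrite /dih_r; case: ifP => // /dvdn_leq.
  rewrite /bump /= muln_gt0 /= => /(_ isT) h.
  have := ltn_ord i; lia.
rewrite sum_nat_const card_ord /dih_r /bump /=.
case: ifP => h.
  have := dvdn_leq _ h; rewrite muln_gt0 /= => /(_ isT) h'.
  case: (odd d) hd => /= hd; [lia | lia].
case: (odd d) hd h => /= hd h; first lia.
have : (d %| 2 * (m.+1))%N by rewrite mulnC -hd add0n dvdnn.
by rewrite h.
Qed.
Definition Ix := ('I_(d./2).+1 * 'I_2)%type.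
Definition validp (p : Ix) := (p.2 < dih_s d p.1)%N.

Lemma sum_r : (\sum_(p : Ix | validp p) dih_r d p.1 ^ 2)%N = (2 * d)%N.
Proof.
transitivity (\sum_(a < (d./2).+1) \sum_(al < 2 | (al < dih_s d a)%N) dih_r d a ^ 2)%N.
  by rewrite pair_big_dep; apply: eq_bigl.
rewrite -[in RHS]sum_ra big_distrr /=; apply: eq_bigr => a _.
rewrite big_mkcond big_ord_recl big_ord_recl big_ord0.
by case: (rs_cases a) => [[-> ->]|[-> ->]].
Qed.

Lemma phi_surj i : exists p : Ix, validp p && (phi p.1 p.2 == i).
Proof.
apply/existsP; apply: contraT; rewrite negb_exists => /forallP none.
pose h (p : Ix) := phi p.1 p.2.
pose V := [set p : Ix | validp p].
have inj : {in V &, injective h}.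
  move=> [p1 p2] [q1 q2]; rewrite !inE /validp /= => vp vq e.
  have := congr1 (fun k => 'chi[G]_k) e; rewrite /h /= !phiE => E.
  have hp1 : (p1 <= d./2)%N by rewrite -ltnS.
  have hq1 : (q1 <= d./2)%N by rewrite -ltnS.
  have [e1 e2] := psi_inj hp1 vp hq1 vq E.
  by congr (_, _); apply: val_inj.
have S2 : \sum_(i in h @: V) ('chi[G]_i 1%g) ^+ 2 = (2 * d)%:R.
  rewrite big_imset //= -sum_r natr_sum; apply: eq_big => p; first by rewrite inE.
  by move=> _; rewrite /h phiE psi1 natrX.
have S1 : \sum_(i in h @: V) ('chi[G]_i 1%g) ^+ 2 +
          \sum_(i in ~: (h @: V)) ('chi[G]_i 1%g) ^+ 2 = (2 * d)%:R.
  rewrite -dcard -(irr_sum_square G) [RHS](bigID (mem (h @: V))) /=.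
  by congr (_ + _); apply: eq_bigl => j; rewrite ?inE.
rewrite S2 -{2}[(2 * d)%:R]addr0 in S1; move/addrI: S1 => S3.
have ni : i \in ~: (h @: V).
  rewrite inE; apply/imsetP => [[p]]; rewrite inE => vp ei.
  by have := none p; rewrite vp ei /h eqxx.
have := psumr_eq0P (fun j _ => exprn_ge0 _ (ltW (irr1_gt0 j))) S3 ni.
by move/eqP; rewrite expf_eq0 /= (negbTE (irr1_neq0 i)).
Qed.
Lemma om_neq0 : omega != 0.
Proof. by apply: root_neq0; rewrite (prim_expr_order om_prim). Qed.

Lemma bar_pow (c : int) :
  omega ^+ (dih_bar d c) = omega ^ c \/ omega ^+ (dih_bar d c) = (omega ^ c)^-1.
Proof.
set m0 := `|(c %% d%:Z)%Z|%N.
have dnz : (d%:Z != 0) by rewrite eqz_nat -lt0n.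
have hm : (c %% d%:Z)%Z = m0%:Z by rewrite /m0 gez0_abs // modz_ge0.
have om : omega ^ c = omega ^+ m0.
  rewrite {1}(divz_eq c d%:Z) expfzDr ?om_neq0 // hm -exprnP.
  by rewrite [((_ %/ _)%Z * _)]mulrC -exprz_exp -exprnP (prim_expr_order om_prim) exp1rz mul1r.
have m0d : (m0 < d)%N by rewrite -ltz_nat -hm ltz_pmod // ltz_nat.
rewrite /dih_bar; cbv zeta; rewrite -/m0 om; case: (leqP m0 (d - m0)) => h.
  by left.
right.
have e : omega ^+ (d - m0) * omega ^+ m0 = 1 by rewrite -exprD subnK ?(prim_expr_order om_prim) // ltnW.
have nz : omega ^+ m0 != 0 by rewrite expf_neq0 // om_neq0.
by rewrite -[LHS]mulr1 -(mulfV nz) mulrA e mul1r.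
Qed.

Definition cc (a b t : nat) : nat := dih_bar d (a%:Z + b%:Z * (-1) ^+ t).
Definition Wt (a b t : nat) : algC :=
  omega ^+ a * (if t == 0%N then omega ^+ b else (omega ^+ b)^-1).

Lemma cc_pow a b t : (t < 2)%N ->
  omega ^+ (cc a b t) = Wt a b t \/ omega ^+ (cc a b t) = (Wt a b t)^-1.
Proof.
move=> t2; suff -> : Wt a b t = omega ^ (a%:Z + b%:Z * (-1) ^+ t) by apply: bar_pow.
rewrite /Wt; case: t t2 => [|[|//]] _ /=.
  by rewrite expr0 mulr1 expfzDr ?om_neq0 // -!exprnP.
by rewrite expr1 mulrN1 expfzDr ?om_neq0 // -invr_expz -!exprnP.
Qed.

Definition Psi (z : algC) (g : nat) : 'CF(G) :=
  if z ^+ 2 == 1 then chi1 z ((-1) ^+ g) else chi2 z.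

Lemma PsiV z g : z ^+ d = 1 -> Psi z^-1 g = Psi z g.
Proof.
move=> zd; rewrite /Psi exprVn invr_eq1; case: ifP => [/eqP h|_].
  by rewrite inv_sq1.
exact: chi2V.
Qed.

Lemma Wt_d a b t : Wt a b t ^+ d = 1.
Proof. by rewrite /Wt exprMn om_d; case: ifP; rewrite ?exprVn om_d ?invr1 mulr1. Qed.

Lemma psi_cc a b t g : (t < 2)%N -> psi (cc a b t) g = Psi (Wt a b t) g.
Proof.
move=> t2; rewrite /psi -/(Psi _ _).
by case: (cc_pow a b t2) => ->; rewrite ?PsiV ?Wt_d.
Qed.

Lemma s_cc a b t : (t < 2)%N -> dih_s d (cc a b t) = if Wt a b t ^+ 2 == 1 then 2%N else 1%N.
Proof.
move=> t2; rewrite /dih_s r_eq.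
case: (cc_pow a b t2) => ->; rewrite ?exprVn ?invr_eq1; by case: ifP.
Qed.

Lemma r_le2 b : (dih_r d b <= 2)%N.
Proof. by rewrite /dih_r; case: ifP. Qed.
Definition condg (a al b be g : nat) : bool :=
  ((gcdn (dih_s d a) (dih_s d b))%:Z %| (al%:Z + be%:Z - g%:Z))%Z.

Lemma cond2 (al be g : nat) : (al < 2)%N -> (be < 2)%N -> (g < 2)%N ->
  ((2%:Z %| al%:Z + be%:Z - g%:Z)%Z = (g == (al + be) %% 2)%N).
Proof. by case: al => [|[|//]]; case: be => [|[|//]]; case: g => [|[|//]]. Qed.

Lemma inner_all (W : algC) : W ^+ d = 1 ->
  \sum_(g < (if W ^+ 2 == 1 then 2%N else 1%N)) Psi W g = chi2 W.
Proof.
move=> Wd.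
case h : (W ^+ 2 == 1); rewrite !big_ord_recl big_ord0 /Psi h addr0.
  by rewrite expr0 expr1 (chi2_split (eqP h) Wd).
by [].
Qed.

Lemma big1_cond (F : nat -> 'CF(G)) (P : nat -> bool) :
  P 0%N -> \sum_(g < 1 | P g) F g = F 0%N.
Proof. by move=> h; rewrite big_mkcond big_ord_recl big_ord0 /= h addr0. Qed.

Lemma prod_decomp a al b be : (al < dih_s d a)%N -> (be < dih_s d b)%N ->
  psi a al * psi b be = ((gcdn (dih_r d a) (dih_r d b))%:R / (dih_r d b)%:R) *:
    \sum_(t < dih_r d b) \sum_(g < dih_s d (cc a b t) | condg a al b be g) psi (cc a b t) g.
Proof.
move=> hal hbe.
have inner (t : 'I_(dih_r d b)) :
    \sum_(g < dih_s d (cc a b t) | condg a al b be g) psi (cc a b t) g =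
    \sum_(g < (if Wt a b t ^+ 2 == 1 then 2%N else 1%N) | condg a al b be g) Psi (Wt a b t) g.
  have t2 : (t < 2)%N := leq_trans (ltn_ord t) (r_le2 b).
  rewrite s_cc //; apply: eq_bigr => g _; exact: psi_cc.
rewrite (eq_bigr _ (fun t _ => inner t)); clear inner.
move: hal hbe; rewrite /condg /dih_s !r_eq /Wt /psi -!/(Psi _ _).
have ud := om_d a; have vd := om_d b.
move: ud vd; set u := omega ^+ a; set v := omega ^+ b => ud vd.
have nv : v != 0 by apply: root_neq0.
case hu : (u ^+ 2 == 1); case hv : (v ^+ 2 == 1) => hal hbe.
-
  rewrite big_ord_recl big_ord0 addr0.
  have huv : ((u * v) ^+ 2 == 1) by rewrite exprMn (eqP hu) (eqP hv) mulr1.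
  rewrite /= huv (_ : gcdn (2 %/ 1) (2 %/ 1) = 2%N) // (_ : gcdn 1 1 = 1%N) // divr1 scale1r.
  rewrite /Psi hu hv huv prodC1 ?(eqP hu) ?(eqP hv) ?sgn2 //.
  rewrite big_mkcond !big_ord_recl big_ord0 addr0.
  move: hal hbe; rewrite !divn1 => hal hbe.
  rewrite !cond2 //.
  by case: al hal => [|[|//]] _; case: be hbe => [|[|//]] _ /=;
   rewrite /bump /= ?expr0 ?expr1 ?mulrNN ?mulr1 ?mul1r ?addr0 ?add0r.
-
  rewrite !big_ord_recl big_ord0 addr0 /=.
  have h1 : ((u * v) ^+ 2 == 1) = false by rewrite exprMn (eqP hu) mul1r hv.
  have h2 : ((u * v^-1) ^+ 2 == 1) = false by rewrite exprMn (eqP hu) mul1r exprVn invr_eq1 hv.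
  rewrite h1 h2 (_ : gcdn (2 %/ 1) (2 %/ 2) = 1%N) // (_ : gcdn 1 2 = 1%N) //.
  rewrite !big_ord1_cond !dvd1z /Psi h1 h2 hu hv /=.
  have -> : chi2 (u * v^-1) = chi2 (u * v).
    rewrite -chi2V; last by rewrite exprMn exprVn ud vd invr1 mulr1.
    by rewrite invfM invrK inv_sq1 ?(eqP hu) // mulrC.
  have n2 : (2%:R : algC) != 0 by rewrite pnatr_eq0.
  by rewrite prodC12 ?(eqP hu) // -mulr2n -scaler_nat scalerA mul1r mulVf // scale1r.
-
  rewrite big_ord_recl big_ord0 addr0 /=.
  have h1 : ((u * v) ^+ 2 == 1) = false by rewrite exprMn (eqP hv) mulr1 hu.
  rewrite h1 (_ : gcdn (2 %/ 2) (2 %/ 1) = 1%N) // (_ : gcdn 2 1 = 1%N) // divr1 scale1r.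
  rewrite big_ord1_cond dvd1z /Psi h1 hu hv /=.
  by rewrite prodC21 ?(eqP hv).
-
  rewrite (_ : gcdn (2 %/ 2) (2 %/ 2) = 1%N) // (_ : gcdn 2 2 = 2%N) // divff ?pnatr_eq0 // scale1r.
  rewrite (eq_bigr (fun t : 'I_2 => \sum_(g < (if (u * (if (t : nat) == 0%N then v else v^-1)) ^+ 2 == 1
        then 2%N else 1%N)) Psi (u * (if (t : nat) == 0%N then v else v^-1)) g)); last first.
    by move=> t _; apply: eq_bigl => g; rewrite dvd1z.
  rewrite !big_ord_recl big_ord0 addr0 /=.
  rewrite !inner_all //; last 2 first.
  + by rewrite exprMn exprVn ud vd invr1 mulr1.
  + by rewrite exprMn ud vd mulr1.
  by rewrite /Psi hu hv prodC22.
Qed.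
Lemma cc_le a b t : (cc a b t <= d./2)%N.
Proof.
rewrite /cc /dih_bar; cbv zeta.
set m := `|_|%N; have := odd_double_half d; rewrite -muln2 => hd.
case: (leqP m (d - m)) => h; lia.
Qed.

Definition Dn (a al b be c0 g0 : nat) : nat :=
  \sum_(t < dih_r d b) \sum_(g < dih_s d (cc a b t) | condg a al b be g)
     ((cc a b t == c0) && (g == g0 :> nat)).

Lemma psi_dot c g c' g' : (c <= d./2)%N -> (g < dih_s d c)%N ->
  (c' <= d./2)%N -> (g' < dih_s d c')%N ->
  '[psi c g, psi c' g'] = ((c == c') && (g == g'))%:R.
Proof.
move=> h1 h2 h3 h4; rewrite -!phiE cfdot_irr.
suff -> : (phi c g == phi c' g') = ((c == c') && (g == g')) by [].
apply/idP/idP => [/eqP E | /andP [/eqP -> /eqP ->] //].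
have := congr1 (fun k => 'chi[G]_k) E; rewrite /= !phiE => /psi_inj.
by case/(_ h1 h2 h3 h4) => -> ->; rewrite !eqxx.
Qed.

Lemma dot_eval a al b be c0 g0 : (al < dih_s d a)%N -> (be < dih_s d b)%N ->
  (c0 <= d./2)%N -> (g0 < dih_s d c0)%N ->
  '[psi a al * psi b be, psi c0 g0] =
  ((gcdn (dih_r d a) (dih_r d b))%:R / (dih_r d b)%:R) * (Dn a al b be c0 g0)%:R.
Proof.
move=> hal hbe hc hg; rewrite prod_decomp // cfdotZl cfdot_suml; congr (_ * _).
rewrite /Dn natr_sum; apply: eq_bigr => t _; rewrite cfdot_suml natr_sum.
by apply: eq_bigr => g _; rewrite psi_dot ?cc_le.
Qed.
Lemma card_fiber (T U : finType) (P : pred T) (h : T -> U) (A : pred U) :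
  #|[set p | P p && (h p \in A)]| = (\sum_(u in A) #|[set p | P p && (h p == u)]|)%N.
Proof.
rewrite -sum1_card (partition_big h A); last by move=> p; rewrite inE => /andP[].
apply: eq_bigr => u Au; rewrite -sum1_card; apply: eq_bigl => p; rewrite !inE.
case: eqP => [->|_]; last by rewrite !andbF.
by rewrite !andbT (_ : u \in A = true) ?andbT //; apply: Au.
Qed.

Lemma rhs_eval (Q : finType) (S : nat -> nat -> {set Q}) a al b be c0 g0 q :
  q \in S c0 g0 ->
  (forall c g, (c <= d./2)%N -> (g < dih_s d c)%N -> (c, g) != (c0, g0) -> q \notin S c g) ->
  rhs_coef d S a al b be q =
  ((dih_r d a * gcdn (dih_r d a) (dih_r d b))%N)%:R * ((Dn a al b be c0 g0)%:R / (dih_r d c0)%:R).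
Proof.
move=> hq hdis; rewrite /rhs_coef; congr (_ * _); rewrite /Dn natr_sum mulr_suml.
apply: eq_bigr => t _; cbv zeta; rewrite natr_sum mulr_suml; apply: eq_bigr => g _.
rewrite -/(cc a b t).
case E: ((cc a b t == c0) && (g == g0 :> nat)).
  by move/andP: E => [/eqP e1 /eqP e2]; rewrite e2 e1 hq.
rewrite (negbTE (hdis _ _ (cc_le a b t) (ltn_ord g) _)) ?mul0r //.
by rewrite xpair_eqE E.
Qed.

Lemma ne_r c : (dih_r d c)%:R != 0 :> algC.
Proof. by rewrite pnatr_eq0 /dih_r; case: ifP. Qed.
Lemma ne_rQ c : (dih_r d c)%:R != 0 :> rat.
Proof. by rewrite pnatr_eq0 /dih_r; case: ifP. Qed.

Lemma valid_of (p : Ix) : validp p -> (p.1 <= d./2)%N /\ (p.2 < dih_s d p.1)%N.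
Proof. by move=> v; split => //; rewrite -ltnS. Qed.

Lemma phi_eq c g c' g' : (c <= d./2)%N -> (g < dih_s d c)%N ->
  (c' <= d./2)%N -> (g' < dih_s d c')%N ->
  (phi c g == phi c' g') = ((c, g) == (c', g')).
Proof.
move=> h1 h2 h3 h4; apply/idP/idP => [/eqP E | /eqP [-> ->] //].
have := congr1 (fun k => 'chi[G]_k) E; rewrite /= !phiE => /psi_inj.
by case/(_ h1 h2 h3 h4) => -> ->.
Qed.
Lemma card_sum (T : finType) (A : pred T) : #|A| = (\sum_(t : T) (t \in A))%N.
Proof. by rewrite -sum1_card big_mkcond; apply: eq_bigr => t _; case: (t \in A). Qed.

Lemma alg1 (rc cnt ra rb g D : algC) : rc != 0 -> rb != 0 ->
  rc * rc * cnt = ra * rb * rc * (g / rb * D) -> cnt * rc = ra * g * D.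
Proof.
move=> h1 h2 E; apply: (mulfI h1).
rewrite (_ : rc * (cnt * rc) = rc * rc * cnt); last by ring.
by rewrite E; field.
Qed.

Lemma rpos c : (0 < dih_r d c)%N.
Proof. by rewrite /dih_r; case: ifP. Qed.

Lemma main_sec (Q : finType) (mul : Q -> Q -> Q) : #|Q| = (2 * d)%N ->
  balanced_cover G mul <->
  exists S : nat -> nat -> {set Q},
    [/\ (forall a alpha, (a <= d./2)%N -> (alpha < dih_s d a)%N ->
           #|S a alpha| = (dih_r d a ^ 2)%N),
        (forall a alpha b beta, (a <= d./2)%N -> (alpha < dih_s d a)%N ->
           (b <= d./2)%N -> (beta < dih_s d b)%N -> (a, alpha) != (b, beta) ->
           [disjoint S a alpha & S b beta]) &
        (forall a alpha b beta, (a <= d./2)%N -> (alpha < dih_s d a)%N ->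
           (b <= d./2)%N -> (beta < dih_s d b)%N ->
           forall q : Q,
             (prod_coef mul (S a alpha) (S b beta) q)%:R = rhs_coef d S a alpha b beta q)].
Proof.
move=> cQ; split.
- case=> f [[cQG fsurj fcard fcnt] bal].
  pose S a al := if (a <= d./2)%N && (al < dih_s d a)%N then [set q | f q == phi a al] else set0.
  have SE a al : (a <= d./2)%N -> (al < dih_s d a)%N -> S a al = [set q | f q == phi a al].
    by move=> h1 h2; rewrite /S h1 h2.
  have fval q : exists c g, [/\ (c <= d./2)%N, (g < dih_s d c)%N & f q = phi c g].
    have [p /andP [vp /eqP ep]] := phi_surj (f q); have [h1 h2] := valid_of vp.
    by exists p.1, p.2.
  exists S; split.
  + move=> a al ha hal; rewrite SE //.
    have := fcard (phi a al); rewrite phiE psi1 -natrX => /eqP; rewrite eqr_nat => /eqP.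
    by [].
  + move=> a al b be ha hal hb hbe ne; rewrite !SE //.
    apply/pred0P => q /=; rewrite !inE; apply/negP => /andP [/eqP e1 /eqP e2].
    by move: ne; rewrite -(phi_eq ha hal hb hbe) -e1 e2 eqxx.
  + move=> a al b be ha hal hb hbe q.
    have [c0 [g0 [hc hg fq]]] := fval q.
    rewrite (@rhs_eval _ _ _ _ _ _ c0 g0); last first.
    * move=> c g h1 h2 ne; rewrite SE // inE fq (phi_eq hc hg h1 h2) eq_sym.
      exact: ne.
    * by rewrite SE // inE fq eqxx.
    pose cnt q' := #|[set p : Q * Q | [&& f p.1 == phi a al, f p.2 == phi b be & mul p.1 p.2 == q']]|.
    have pc : prod_coef mul (S a al) (S b be) q = cnt q.
      by rewrite /prod_coef !SE //; apply: eq_card => p; rewrite !inE.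
    have key : (cnt q * dih_r d c0 = dih_r d a * gcdn (dih_r d a) (dih_r d b) * Dn a al b be c0 g0)%N.
      have F := fcnt (phi a al) (phi b be) (phi c0 g0).
      rewrite !phiE !psi1 dot_eval // in F.
      have tot : #|[set p : Q * Q | [&& f p.1 == phi a al, f p.2 == phi b be & f (mul p.1 p.2) == phi c0 g0]]|
                 = (dih_r d c0 ^ 2 * cnt q)%N.
        have -> : [set p : Q * Q | [&& f p.1 == phi a al, f p.2 == phi b be & f (mul p.1 p.2) == phi c0 g0]]
            = [set p | ((f p.1 == phi a al) && (f p.2 == phi b be)) && ((fun p : Q * Q => mul p.1 p.2) p \in [pred q' | f q' == phi c0 g0])].
          by apply/setP => p; rewrite !inE andbA.
        rewrite card_fiber.
        rewrite (eq_bigr (fun _ => cnt q)); last first.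
          move=> q' /= /eqP fq'; rewrite /cnt -(bal (phi a al) (phi b be) q' q) ?fq ?fq' //.
          by apply: eq_card => p; rewrite !inE andbA.
        rewrite sum_nat_const.
        have := fcard (phi c0 g0); rewrite phiE psi1 -natrX => /eqP; rewrite eqr_nat => /eqP <-.
        by congr (_ * _)%N; apply: eq_card => q'; rewrite !inE.
      rewrite tot in F.
      apply/eqP; rewrite -(eqr_nat algC) !natrM; apply/eqP.
      apply: (alg1 (ne_r c0) (ne_r b)).
      by move: F; rewrite natrM natrX expr2.
    by rewrite pc mulrA -natrM -key natrM mulfK // ne_rQ.
- case=> S [Scard Sdis Seq].
  have disj c g c' g' q : (c <= d./2)%N -> (g < dih_s d c)%N ->
      (c' <= d./2)%N -> (g' < dih_s d c')%N -> (c, g) != (c', g') ->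
      q \in S c g -> q \notin S c' g'.
    move=> h1 h2 h3 h4 ne qS; apply/negP => qS'.
    by have := disjointFr (Sdis _ _ _ _ h1 h2 h3 h4 ne) qS; rewrite qS'.
  have cover q : exists p : Ix, validp p && (q \in S p.1 p.2).
    apply/existsP; apply: contraT; rewrite negb_exists => /forallP none.
    have E1 : (\sum_(p : Ix | validp p) #|S p.1 p.2|)%N = #|Q|.
      rewrite cQ -sum_r; apply: eq_bigr => p vp; have [h1 h2] := valid_of vp.
      by rewrite Scard.
    have E2 : (\sum_(p : Ix | validp p) #|S p.1 p.2|)%N =
              (\sum_(q' : Q) #|[set p : Ix | validp p && (q' \in S p.1 p.2)]|)%N.
      rewrite (eq_bigr (fun p : Ix => \sum_(q' : Q) (q' \in S p.1 p.2))%N); last first.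
        by move=> p _; rewrite card_sum.
      rewrite exchange_big /=; apply: eq_bigr => q' _.
      by rewrite card_sum big_mkcond /=; apply: eq_bigr => p _; rewrite inE; case: (validp p).
    have le1 q' : (#|[set p : Ix | validp p && (q' \in S p.1 p.2)]| <= 1)%N.
      apply/card_le1_eqP => p p'; rewrite !inE => /andP [vp qp] /andP [vp' qp'].
      apply/eqP; apply: contraT => ne.
      have [h1 h2] := valid_of vp; have [h3 h4] := valid_of vp'.
      have ne' : (p.1 : nat, p.2 : nat) != (p'.1 : nat, p'.2 : nat).
        apply: contra ne; rewrite xpair_eqE => /andP [/eqP e1 /eqP e2].
        by case: p p' {vp vp' qp qp' h1 h2 h3 h4} e1 e2 => [p1 p2] [p1' p2'] /= e1 e2; apply/eqP; congr (_, _); apply: val_inj.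
      by have := disj _ _ _ _ q' h1 h2 h3 h4 ne' qp; rewrite qp'.
    have z : #|[set p : Ix | validp p && (q \in S p.1 p.2)]| = 0%N.
      apply/eqP; rewrite cards_eq0; apply/eqP/setP => p; rewrite !inE.
      by apply/negbTE; apply: none.
    have : (#|Q| <= #|Q|.-1)%N.
      rewrite -{1}E1 E2 (bigD1 q) //= z add0n.
      apply: (@leq_trans (\sum_(i | i != q) 1)%N); first by apply: leq_sum => i _; apply: le1.
      by rewrite sum1_card -(cardC1 q); apply/eq_leq/eq_card => i; rewrite !inE.
    have : (0 < #|Q|)%N by apply/card_gt0P; exists q.
    lia.
  pose f q := if [pick p : Ix | validp p && (q \in S p.1 p.2)] is Some p then phi p.1 p.2 else phi 0 0.
  have fE q c g : (c <= d./2)%N -> (g < dih_s d c)%N -> (f q == phi c g) = (q \in S c g).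
    move=> hc hg; rewrite /f; case: pickP => [p /andP [vp qp] | none]; last first.
      by have [p /andP [vp qp]] := cover q; have := none p; rewrite vp qp.
    have [h1 h2] := valid_of vp; rewrite phi_eq //.
    apply/idP/idP => [/eqP [<- <-] // | qc].
    apply: contraT => ne.
    by have := disj _ _ _ _ q h1 h2 hc hg ne qp; rewrite qc.
  have keyB a al b be c0 g0 q : (a <= d./2)%N -> (al < dih_s d a)%N ->
      (b <= d./2)%N -> (be < dih_s d b)%N -> (c0 <= d./2)%N -> (g0 < dih_s d c0)%N ->
      q \in S c0 g0 ->
      (prod_coef mul (S a al) (S b be) q * dih_r d c0 =
         dih_r d a * gcdn (dih_r d a) (dih_r d b) * Dn a al b be c0 g0)%N.
    move=> ha hal hb hbe hc hg qS.
    have E := Seq _ _ _ _ ha hal hb hbe q.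
    rewrite (@rhs_eval _ _ _ _ _ _ c0 g0) // in E; last first.
      by move=> c g h1 h2 ne; apply: (disj _ _ _ _ q hc hg h1 h2); rewrite // eq_sym.
    apply/eqP; rewrite -(eqr_nat rat) natrM E mulrA -natrM divfK ?ne_rQ //.
  have cset a al b be q : (a <= d./2)%N -> (al < dih_s d a)%N ->
      (b <= d./2)%N -> (be < dih_s d b)%N ->
      #|[set p : Q * Q | [&& f p.1 == phi a al, f p.2 == phi b be & mul p.1 p.2 == q]]|
      = prod_coef mul (S a al) (S b be) q.
    by move=> ha hal hb hbe; apply: eq_card => p; rewrite !inE !fE.
  exists f; split; first split.
  + by rewrite cQ dcard.
  + move=> i; have [p /andP [vp /eqP ep]] := phi_surj i; have [h1 h2] := valid_of vp.
    have : (0 < #|S p.1 p.2|)%N by rewrite Scard // expn_gt0 rpos.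
    by case/card_gt0P => q qS; exists q; rewrite -ep; apply/eqP; rewrite fE.
  + move=> i; have [p /andP [vp /eqP ep]] := phi_surj i; have [h1 h2] := valid_of vp.
    rewrite -ep phiE psi1 -natrX -(Scard _ _ h1 h2); congr (_%:R).
    by apply: eq_card => q; rewrite inE fE.
  + move=> i j k.
    have [p /andP [vp /eqP <-]] := phi_surj i; have [ha hal] := valid_of vp.
    have [p' /andP [vp' /eqP <-]] := phi_surj j; have [hb hbe] := valid_of vp'.
    have [p'' /andP [vp'' /eqP <-]] := phi_surj k; have [hc hg] := valid_of vp''.
    rewrite !phiE !psi1 dot_eval //.
    set a := p.1; set al := p.2; set b := p'.1; set be := p'.2; set c0 := p''.1; set g0 := p''.2.
    have -> : [set pq : Q * Q | [&& f pq.1 == phi a al, f pq.2 == phi b be & f (mul pq.1 pq.2) == phi c0 g0]]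
        = [set pq | ((f pq.1 == phi a al) && (f pq.2 == phi b be)) && ((fun pq : Q * Q => mul pq.1 pq.2) pq \in [pred u | u \in S c0 g0])].
      by apply/setP => pq; rewrite !inE andbA (fE _ _ _ hc hg).
    rewrite card_fiber.
    have tot : ((\sum_(u in [pred u | u \in S c0 g0]) #|[set pq : Q * Q | (f pq.1 == phi a al) && (f pq.2 == phi b be) && (mul pq.1 pq.2 == u)]|) * dih_r d c0
               = dih_r d c0 * (dih_r d c0 * (dih_r d a * gcdn (dih_r d a) (dih_r d b) * Dn a al b be c0 g0)))%N.
      rewrite big_distrl /= (eq_bigr (fun _ => dih_r d a * gcdn (dih_r d a) (dih_r d b) * Dn a al b be c0 g0))%N; last first.
        move=> u; rewrite inE => uS; rewrite -(keyB _ _ _ _ _ _ u ha hal hb hbe hc hg uS) -cset //.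
        by congr (_ * _)%N; apply: eq_card => pq; rewrite !inE andbA.
      rewrite sum_nat_const (@eq_card _ _ (S c0 g0)); last by move=> u; rewrite inE.
      rewrite Scard //; nia.
    move/eqP: tot; rewrite [X in (_ == X)%N]mulnC eqn_pmul2r ?rpos // => /eqP ->.
    rewrite !natrM; field.
    by rewrite ne_r.
- move=> i j q q' e.
  have [p /andP [vp /eqP <-]] := phi_surj i; have [ha hal] := valid_of vp.
  have [p' /andP [vp' /eqP <-]] := phi_surj j; have [hb hbe] := valid_of vp'.
  have [p'' /andP [vp'' qS]] := cover q; have [hc hg] := valid_of vp''.
  have qS' : q' \in S p''.1 p''.2 by rewrite -fE // -e fE.
  rewrite !cset //; apply/eqP; rewrite -(eqn_pmul2r (rpos p''.1)).
  by rewrite (keyB _ _ _ _ _ _ q ha hal hb hbe hc hg qS) (keyB _ _ _ _ _ _ q' ha hal hb hbe hc hg qS').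
Qed.
End DihGroup.

Local Open Scope ring_scope.

Theorem mainTheorem4 (d : nat) (gT : finGroupType) (G : {group gT}) (x y : gT)
  (Q : finType) (mul : Q -> Q -> Q) :
  (0 < d)%N -> dihedral_pres gT d G x y -> is_quasigroup mul -> #|Q| = (2 * d)%N ->
  balanced_cover G mul <->
  exists S : nat -> nat -> {set Q},
    [/\ (forall a alpha, (a <= d./2)%N -> (alpha < dih_s d a)%N ->
           #|S a alpha| = (dih_r d a ^ 2)%N),
        (forall a alpha b beta, (a <= d./2)%N -> (alpha < dih_s d a)%N ->
           (b <= d./2)%N -> (beta < dih_s d b)%N -> (a, alpha) != (b, beta) ->
           [disjoint S a alpha & S b beta]) &
        (forall a alpha b beta, (a <= d./2)%N -> (alpha < dih_s d a)%N ->
           (b <= d./2)%N -> (beta < dih_s d b)%N ->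
           forall q : Q,
             (prod_coef mul (S a alpha) (S b beta) q)%:R = rhs_coef d S a alpha b beta q)].
Proof.
move=> d_gt0 Hp _ cQ.
exact: (@main_sec d gT G x y d_gt0 Hp Q mul cQ).
Qed.
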